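(* Let $H=(S_0,e_0,S_1,\dots)$ be a history sequence of the Simpler Lazy Set algorithm, let $S_i$ be a state of $H$, and let $a,b$ be active addresses of $S_i$ with $a\neq\mathsf T$ such that the path from $a$ to $\mathsf T$ in $S_i$ does not contain $b$. Then the path from $a$ to $\mathsf T$ in $S_{i+1}$ does not contain $b$. Consequently, for every $j>i$, $b$ is not on the path from $a$ to $\mathsf T$ in $S_j$.
   Context: Simpler Lazy Set algorithm. Fix a countably infinite set $A$ of addresses with distinguished $\mathsf H,\mathsf T$; $\mathrm{Number}=\mathbb N\cup\{-1,\infty\}$. A state $S$: set $\mathrm{Active}^S\subseteq A$, $\mathrm{Next}^S:\mathrm{Active}^S\setminus\{\mathsf T\}\to A$, $\mathrm{Val}^S:\mathrm{Active}^S\to\mathrm{Number}$, and for each process $p$: $PC_p\in\{0,1,2,3.1,\dots,3.5\}$, $x_p\in\mathbb N$, $\mathrm{curr}_p\in A$, $\mathrm{status}_p$. $S$ is normal if $\mathrm{Active}^S$ is finite, $\mathsf H,\mathsf T$ are active with values $-1,\infty$, other active addresses have values in $\mathbb N$, and for active $a\neq\mathsf T$, $\mathrm{Next}(a)$ is active with $\mathrm{Val}(a)<\mathrm{Val}(\mathrm{Next}(a))$. A path is a sequence $a_1,\dots,a_m$ ($m>1$) of active addresses with $\mathrm{Next}(a_i)=a_{i+1}$; in a normal state each active address $a\ne\mathsf T$ lies on a unique path from $a$ to $\mathsf T$; the main branch is the path from $\mathsf H$ to $\mathsf T$. Initial state: $\mathrm{Active}=\{\mathsf H,\mathsf T\}$,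 $\mathrm{Next}(\mathsf H)=\mathsf T$, all $PC_p=0$. Steps $(S,e,T)$ of a process $p$ on a normal $S$: (i) invocation: $PC_p$ from $0$ to $1$, $2$ or $3.1$, with $x_p\in\mathbb N$ arbitrary; (ii) failure: $PC_p$ from $1$ or $2$ to $0$ with $\chi(e)=f$, nothing else changes; (iii) $\mathrm{AD}(x)$ ($x=x_p$, $PC_p$ from $1$ to $0$): with $\mathfrak p$ the main-branch address having $\mathrm{Val}(\mathfrak p)<x\le\mathrm{Val}(\mathrm{Next}(\mathfrak p))$: if $\mathrm{Val}(\mathrm{Next}(\mathfrak p))=x$, no other change, $\chi(e)=1$; else a new address $a\notin\mathrm{Active}^S$ is made active with $\mathrm{Val}(a)=x$, $\mathrm{Next}^T(\mathfrak p)=a$, $\mathrm{Next}^T(a)=\mathrm{Next}^S(\mathfrak p)$, $\chi(e)=0$; (iv) $\mathrm{RM}(x)$ ($PC_p$ from $2$ to $0$): if the main branch has an address $cu$ of value $x$, with $pred$ its main-branch predecessor, set $\mathrm{Next}^T(pred)=\mathrm{Next}^S(cu)$, $\chi(e)=1$; else no change, $\chi(e)=0$; (v) CONTAINS$(x)$ lines, each an atomic step changing only $\mathrm{curr}_p,PC_p,\mathrm{status}_p$: 3.1 $\mathrm{curr}_p:=\mathsf H$; 3.2/3.3 $\mathrm{curr}_p:=\mathrm{Next}(\mathrm{curr}_p)$; 3.4 if $\mathrm{Val}(\mathrm{curr}_p)\ge x$ go to 3.5 else to 3.3; 3.5 return $1$ if $\mathrm{Val}(\mathrm{curr}_p)=x$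 else $0$, $PC_p:=0$. A history sequence is $(S_0,e_0,S_1,\dots)$ with $S_0$ the initial state and each $(S_i,e_i,S_{i+1})$ a step of some process. *)

(* Defs.v *)
From mathcomp Require Import all_boot.
Set Implicit Arguments. Unset Strict Implicit. Unset Printing Implicit Defensive.

Inductive Number := NNeg1 | NNat of nat | NInf.

Definition num_lt (u v : Number) : bool :=
  match u, v with
  | NNeg1, NNeg1 => false
  | NNeg1, _ => true
  | NNat m, NNat n => m < n
  | NNat _, NInf => true
  | _, _ => false
  end.
Definition num_le (u v : Number) : bool := ~~ num_lt v u.
Definition num_eq (u v : Number) : bool := num_le u v && num_le v u.

(* program counter values 0, 1, 2, 3.1, ..., 3.5 *)
Inductive PCv := L0 | L1 | L2 | L31 | L32 | L33 | L34 | L35.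

Inductive Chi := ChiF | Chi0 | Chi1.

Record Event (P : Type) := mkEvent { ev_proc : P; ev_chi : option Chi }.

(* A state. Next and Val are total functions, but only their values on
   the intended domains (Active \ {T}, resp. Active) are ever constrained. *)
Record State (A P : Type) := mkState {
  active : A -> bool;
  next   : A -> A;
  val    : A -> Number;
  pc     : P -> PCv;
  xv     : P -> nat;
  curr   : P -> A;
  status : P -> nat }.

Section Model.
Variables (A : countType) (H T : A) (P : Type).
Local Notation State := (State A P).

Definition normal (S : State) : Prop :=
  (exists s : seq A, forall a, active S a -> a \in s) /\
  active S H /\ active S T /\ val S H = NNeg1 /\ val S T = NInf /\
  (forall a, active S a -> a <> H -> a <> T -> exists n, val S a = NNat n) /\
  (forall a, active S a -> a <> T ->
     active S (next S a) /\ num_lt (val S a) (val S (next S a))).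

Definition path_from_to (S : State) (a b : A) (l : seq A) : Prop :=
  exists l', l = a :: l' /\ l' <> [::] /\ all (active S) l /\
    last a l' = b /\ path (fun u v => (u != T) && (next S u == v)) a l'.

Definition on_main (S : State) (c : A) : Prop :=
  exists l, path_from_to S H T l /\ c \in l.

Definition same_heap (S S' : State) : Prop :=
  (forall c, active S' c = active S c) /\
  (forall c, active S c -> c <> T -> next S' c = next S c) /\
  (forall c, active S c -> val S' c = val S c).

Definition others_same (p : P) (S S' : State) : Prop :=
  forall q, q <> p ->
    pc S' q = pc S q /\ xv S' q = xv S q /\ curr S' q = curr S q /\
    status S' q = status S q.

Definition invocation_step (p : P) (S : State) (e : Event P) (S' : State) :=
  pc S p = L0 /\ (pc S' p = L1 \/ pc S' p = L2 \/ pc S' p = L31) /\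
  same_heap S S' /\ curr S' p = curr S p /\ status S' p = status S p.

Definition failure_step (p : P) (S : State) (e : Event P) (S' : State) :=
  (pc S p = L1 \/ pc S p = L2) /\ pc S' p = L0 /\ ev_chi e = Some ChiF /\
  same_heap S S' /\ xv S' p = xv S p /\ curr S' p = curr S p /\
  status S' p = status S p.

Definition add_step (p : P) (S : State) (e : Event P) (S' : State) :=
  let x := xv S p in
  pc S p = L1 /\ pc S' p = L0 /\
  xv S' p = xv S p /\ curr S' p = curr S p /\ status S' p = status S p /\
  exists pp, on_main S pp /\ pp <> T /\
    num_lt (val S pp) (NNat x) /\ num_le (NNat x) (val S (next S pp)) /\
    ((val S (next S pp) = NNat x /\ same_heap S S' /\ ev_chi e = Some Chi1) \/
     (val S (next S pp) <> NNat x /\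
      exists a, ~~ active S a /\
        (forall c, active S' c = active S c || (c == a)) /\
        val S' a = NNat x /\
        (forall c, active S c -> val S' c = val S c) /\
        next S' pp = a /\ next S' a = next S pp /\
        (forall c, active S c -> c <> T -> c <> pp -> next S' c = next S c) /\
        ev_chi e = Some Chi0)).

Definition remove_step (p : P) (S : State) (e : Event P) (S' : State) :=
  let x := xv S p in
  pc S p = L2 /\ pc S' p = L0 /\
  xv S' p = xv S p /\ curr S' p = curr S p /\ status S' p = status S p /\
  ((exists cu pred, on_main S cu /\ val S cu = NNat x /\
      on_main S pred /\ pred <> T /\ next S pred = cu /\
      (forall c, active S' c = active S c) /\
      (forall c, active S c -> val S' c = val S c) /\
      next S' pred = next S cu /\
      (forall c, active S c -> c <> T -> c <> pred -> next S' c = next S c) /\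
      ev_chi e = Some Chi1) \/
   ((forall cu, on_main S cu -> val S cu <> NNat x) /\
      same_heap S S' /\ ev_chi e = Some Chi0)).

Definition contains_step (p : P) (S : State) (e : Event P) (S' : State) :=
  let x := xv S p in
  let c := curr S p in
  same_heap S S' /\ xv S' p = xv S p /\
  ((pc S p = L31 /\ pc S' p = L32 /\ curr S' p = H) \/
   (pc S p = L32 /\ active S c /\ c <> T /\ pc S' p = L34 /\
      curr S' p = next S c) \/
   (pc S p = L33 /\ active S c /\ c <> T /\ pc S' p = L34 /\
      curr S' p = next S c) \/
   (pc S p = L34 /\ active S c /\ curr S' p = c /\
      pc S' p = (if num_le (NNat x) (val S c) then L35 else L33)) \/
   (pc S p = L35 /\ active S c /\ curr S' p = c /\ pc S' p = L0 /\
      ev_chi e = Some (if num_eq (val S c) (NNat x) then Chi1 else Chi0))).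

Definition step (S : State) (e : Event P) (S' : State) : Prop :=
  normal S /\
  let p := ev_proc e in
  others_same p S S' /\
  (invocation_step p S e S' \/ failure_step p S e S' \/ add_step p S e S' \/
   remove_step p S e S' \/ contains_step p S e S').

Definition initial (S : State) : Prop :=
  (forall c, active S c = (c == H) || (c == T)) /\
  next S H = T /\ val S H = NNeg1 /\ val S T = NInf /\
  (forall p, pc S p = L0).

(* index k is a state of the history of length len (None = infinite) *)
Definition in_hist (len : option nat) (k : nat) : Prop :=
  match len with None => True | Some n => k <= n end.

Definition history (len : option nat) (S : nat -> State) (e : nat -> Event P)
  : Prop :=
  initial (S 0) /\ forall k, in_hist len k.+1 -> step (S k) (e k) (S k.+1).

End Model.

(* Main.v *)
Require Import Defs.
From mathcomp Require Import all_boot.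
From mathcomp Require Import zify.
Set Implicit Arguments. Unset Strict Implicit. Unset Printing Implicit Defensive.

Definition natpart (v : Number) : nat := match v with NNat n => n | _ => 0 end.
Definition mu (N : nat) (v : Number) : nat :=
  match v with NNeg1 => N.+2 | NNat n => N.+1 - n | NInf => 0 end.

Lemma mu_pos N x : x <> NInf -> natpart x <= N -> 0 < mu N x.
Proof. case: x => [|m|] //= _; lia. Qed.

Lemma mu_dec N x y : num_lt x y -> x <> NInf -> natpart x <= N -> natpart y <= N ->
  mu N y < mu N x.
Proof. case: x => [|m|]; case: y => [|k|] //= *; lia. Qed.

Lemma foldr_max_ge (A : eqType) (f : A -> nat) (s : seq A) d :
  d \in s -> f d <= foldr maxn 0 (map f s).
Proof.
elim: s => //= x s IH; rewrite in_cons => /orP [/eqP->|/IH h].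
  exact: leq_maxl.
exact: leq_trans h (leq_maxr _ _).
Qed.

Lemma path_uniqT (A : eqType) (T : A) (f : A -> A) a l1 l2 :
  path (fun u v => (u != T) && (f u == v)) a l1 -> last a l1 = T ->
  path (fun u v => (u != T) && (f u == v)) a l2 -> last a l2 = T -> l1 = l2.
Proof.
elim: l1 a l2 => [|x l1 IH] a [|y l2] //=.
- move=> _ -> /andP [/andP [h _] _]; by rewrite eqxx in h.
- move=> /andP [/andP [aT _] _] _ _ E; by rewrite E eqxx in aT.
- move=> /andP [/andP [_ /eqP fx] p1] l1T /andP [/andP [_ /eqP fy] p2] l2T.
  have E : x = y by rewrite -fx -fy.
  move: p2 l2T; rewrite -E => p2 l2T; by rewrite (IH x l2).
Qed.

Section S.
Variables (A : countType) (H T : A) (P : Type).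

Definition R (S : State A P) := fun u v => (u != T) && (Defs.next S u == v).

Definition stepH (S S' : State A P) (Q : A -> bool) u :=
     Defs.next S' u = Defs.next S u \/
     (exists w, Q w && (w != T) && (Defs.next S' u == w) && (Defs.next S' w == Defs.next S u)) \/
     (Defs.next S u != T /\ Defs.next S' u = Defs.next S (Defs.next S u)).

Lemma reach_gen (S S' : State A P) (Q : A -> bool) :
  forall n c l, size l <= n -> path (R S) c l -> last c l = T -> all Q (c :: l) ->
  (forall u, u \in c :: l -> u != T -> stepH S S' Q u) ->
  exists l', path (R S') c l' /\ last c l' = T /\ all Q (c :: l').
Proof.
elim => [|n IH] c [|v l] //=.
- move=> _ _ -> hQ _; exists [::]; by rewrite /= hQ.
- move=> _ _ -> hQ _; exists [::]; by rewrite /= hQ.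
move=> hs /andP [/andP [cT /eqP nc] pl] lT /andP [Qc hQ] hyp.
have hyp' : forall u, u \in v :: l -> u != T -> stepH S S' Q u.
  by move=> u hu; apply: hyp; rewrite in_cons hu orbT.
case: (hyp c (mem_head _ _) cT) => [E | [[w /andP [/andP [/andP [Qw wT] /eqP E1] /eqP E2]] | [nT E]]].
- have [l'' [p1 [p2 p3]]] := IH v l hs pl lT hQ hyp'.
  exists (v :: l''); split; [by rewrite /= p1 andbT /R cT E nc eqxx | split => //; apply/andP; split => //].
- have [l'' [p1 [p2 p3]]] := IH v l hs pl lT hQ hyp'.
  exists (w :: v :: l''); split; [by rewrite /= p1 andbT /R cT E1 E2 nc wT !eqxx | split => //; apply/andP; split => //; apply/andP; split => //].
- case: l hs pl lT hQ hyp hyp' => [|v2 l3] hs pl lT hQ hyp hyp'.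
    by move: nT; rewrite nc; move: lT => /= ->; rewrite eqxx.
  move: pl => /= /andP [/andP [vT /eqP nv] pl].
  move: hQ => /= /andP [Qv hQ].
  have hyp'' : forall u, u \in v2 :: l3 -> u != T -> stepH S S' Q u.
    by move=> u hu; apply: hyp; rewrite !in_cons; move: hu; rewrite in_cons => /orP [->|->]; rewrite !orbT.
  have [l'' [p1 [p2 p3]]] := IH v2 l3 (ltnW hs) pl lT hQ hyp''.
  exists (v2 :: l''); split; [by rewrite /= p1 andbT /R cT E nc nv eqxx | split => //; apply/andP; split => //].
Qed.

Lemma exists_path (S : State A P) : normal H T S -> forall c, active S c ->
  exists l, path (R S) c l /\ last c l = T /\ all (active S) (c :: l).
Proof.
case=> [[s hs] [hH [hT [vH [vT [vN hnext]]]]]].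
set N := foldr maxn 0 (map (fun d => natpart (Defs.val S d)) s).
have hbd : forall d, active S d -> natpart (Defs.val S d) <= N.
  move=> d hd; exact: (foldr_max_ge (fun d => natpart (Defs.val S d)) (hs d hd)).
have nI : forall c, active S c -> c <> T -> Defs.val S c <> NInf.
  move=> c hc cT; case: (eqVneq c H) => [->|cH]; first by rewrite vH.
  have [m ->] := vN c hc (elimN eqP cH) cT; done.
have key : forall n c, mu N (Defs.val S c) <= n -> active S c ->
    exists l, path (R S) c l /\ last c l = T /\ all (active S) (c :: l).
  elim => [|n IH] c hm hc; (case: (eqVneq c T) => [->|cT];
    first by exists [::]; rewrite /= hT).
    have := mu_pos (nI c hc (elimN eqP cT)) (hbd c hc); lia.
  have [hn lt] := hnext c hc (elimN eqP cT).
  have := mu_dec lt (nI c hc (elimN eqP cT)) (hbd c hc) (hbd _ hn) => hd.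
  have hm' : mu N (Defs.val S (Defs.next S c)) <= n by lia.
  have [l [p1 [p2 p3]]] := IH (Defs.next S c) hm' hn.
  exists (Defs.next S c :: l); split; first by rewrite /= p1 andbT /R cT eqxx.
  split => //; apply/andP; split => //.
move=> c hc; exact: (key _ c (leqnn _) hc).
Qed.

Lemma step_props (S : State A P) e S' : step H T S e S' ->
  (forall c, active S c -> active S' c) /\
  (forall u, active S u -> u != T ->
     Defs.next S' u = Defs.next S u \/
     (exists w, ~~ active S w && active S' w && (w != T) && (Defs.next S' u == w)
                && (Defs.next S' w == Defs.next S u)) \/
     (Defs.next S u != T /\ Defs.next S' u = Defs.next S (Defs.next S u))).
Proof.
case=> nS /= [_ cs].
have hTa : active S T by case: nS => [_ [_ [hT _]]].
have vT : Defs.val S T = NInf by case: nS => [_ [_ [_ [_ [vT _]]]]].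
have shc : same_heap T S S' -> (forall c, active S c -> active S' c) /\
  (forall u, active S u -> u != T ->
     Defs.next S' u = Defs.next S u \/
     (exists w, ~~ active S w && active S' w && (w != T) && (Defs.next S' u == w)
                && (Defs.next S' w == Defs.next S u)) \/
     (Defs.next S u != T /\ Defs.next S' u = Defs.next S (Defs.next S u))).
  move=> [hact [hnx _]]; split; first by move=> c; rewrite hact.
  move=> u hu uT; left; apply: hnx => //; exact/eqP.
case: cs => [[_ [_ [sh _]]] | [[_ [_ [_ [sh _]]]] | [add | [rem | [sh _]]]]];
  try exact: shc.
- move: add => [_ [_ [_ [_ [_ [pp [_ [ppT [_ [_ [[_ [sh _]] | hh]]]]]]]]]]];
    first exact: shc.
  move: hh => [_ [w [nw [hact [_ [_ [npp [nw' [nother _]]]]]]]]].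
  split; first by move=> c hc; rewrite hact hc.
  move=> u hu uT; case: (eqVneq u pp) => [->|upp].
    right; left; exists w; rewrite nw hact eqxx orbT npp nw' !eqxx /= !andbT.
    by apply/eqP => E; move: nw; rewrite E hTa.
  left; apply: nother => //; exact/eqP.
- move: rem => [_ [_ [_ [_ [_ [hh | [_ [sh _]]]]]]]]; last exact: shc.
  move: hh => [cu [pr [_ [vcu [_ [prT [npr [hact [_ [npr' [nother _]]]]]]]]]]].
  split; first by move=> c; rewrite hact.
  move=> u hu uT; case: (eqVneq u pr) => [->|upr].
    right; right; rewrite npr npr'; split => //.
    by apply/eqP => E; move: vcu; rewrite E vT.
  left; apply: nother => //; exact/eqP.
Qed.

Lemma one_step (S : State A P) e S' a b : step H T S e S' ->
  active S a -> active S b -> a <> T ->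
  (forall l, path_from_to T S a T l -> b \notin l) ->
  (exists l, path_from_to T S' a T l) /\
  (forall l, path_from_to T S' a T l -> b \notin l).
Proof.
move=> st ha hb haT hnb.
have nS := st.1.
have [mono hyp] := step_props st.
have [l0 [p0 [l0T a0]]] := exists_path nS ha.
have bnot : b \notin a :: l0.
  apply: hnb; exists l0; split => //; split; last by [].
  by move=> E; subst l0; apply: haT.
pose Q := fun u => active S' u && (u != b).
have [l' [p1 [p2 p3]]] : exists l', path (R S') a l' /\ last a l' = T /\ all Q (a :: l').
  apply: (@reach_gen S S' Q (size l0) a l0) => //.
    apply/allP => u hu; rewrite /Q mono; last exact: (allP a0 u hu).
    by apply/eqP => E; move: bnot; rewrite -E hu.
  move=> u hu uT.
  case: (hyp u (allP a0 u hu) uT) => [E|[[w /andP [/andP [/andP [/andP [nw aw] wT] E1] E2]]|E]].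
  + by left.
  + right; left; exists w; rewrite /Q aw wT E1 E2 /= !andbT.
    by apply/eqP => E; move: nw; rewrite E hb.
  + by right; right.
have all' : all (active S') (a :: l').
  apply/allP => u hu; by have /andP [] := allP p3 u hu.
split.
  exists (a :: l'); exists l'; split => //; split => //.
  by move=> E; subst l'; apply: haT.
move=> l [l2 [-> [_ [_ [la pa]]]]].
have E := path_uniqT pa la p1 p2; subst l2.
apply/negP => hbin; have := allP p3 b hbin; by rewrite /Q eqxx andbF.
Qed.

Lemma step_mono (S : State A P) e S' c : step H T S e S' -> active S c -> active S' c.
Proof. move=> st; exact: (step_props st).1. Qed.

End S.

Theorem lemma4p12 (A : countType) (H T : A) (HneT : H <> T)
  (Ainf : forall s : seq A, exists a, a \notin s)
  (P : Type) (len : option nat)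
  (St : nat -> State A P) (e : nat -> Event P)
  (hist : history H T len St e)
  (i : nat) (hi : in_hist len i.+1) (a b : A)
  (ha : active (St i) a) (hb : active (St i) b) (haT : a <> T)
  (hnb : forall l, path_from_to T (St i) a T l -> b \notin l) :
  ((exists l, path_from_to T (St i.+1) a T l) /\
   (forall l, path_from_to T (St i.+1) a T l -> b \notin l)) /\
  (forall j, i < j -> in_hist len j ->
     (exists l, path_from_to T (St j) a T l) /\
     (forall l, path_from_to T (St j) a T l -> b \notin l)).
Proof.
have st0 := hist.2 i hi.
have first := one_step st0 ha hb haT hnb.
have gen : forall k, in_hist len (i.+1 + k) ->
   active (St (i.+1 + k)) a /\ active (St (i.+1 + k)) b /\
   (exists l, path_from_to T (St (i.+1 + k)) a T l) /\
   (forall l, path_from_to T (St (i.+1 + k)) a T l -> b \notin l).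
  elim => [|k IH] hk.
    rewrite addn0; split; first exact: step_mono st0 ha.
    split; first exact: step_mono st0 hb.
    exact: first.
  have hk' : in_hist len (i.+1 + k).
    by move: hk; rewrite /in_hist; case: (len) => // n; lia.
  have [ha' [hb' [_ hn']]] := IH hk'.
  have st : step H T (St (i.+1 + k)) (e (i.+1 + k)) (St (i.+1 + k).+1).
    apply: hist.2; by rewrite -addnS.
  rewrite addnS; split; first exact: step_mono st ha'.
  split; first exact: step_mono st hb'.
  exact: one_step st ha' hb' haT hn'.
split; first exact: first.
move=> j hij hj.
have E : j = i.+1 + (j - i.+1) by lia.
rewrite E in hj *; exact: (gen _ hj).2.2.
Qed.
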